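(* Let $A(x)=\sum_{n\ge 0}|\mathfrak D^1_{2n}(4213)|\,x^n$ and $B(x)=\sum_{n\ge 0}|\mathfrak D^1_{2n}(1342)|\,x^n$ be the ordinary generating functions. Then $A(x)=\dfrac{1}{1-xB(x)}$.
   Context: A Dumont permutation of the first kind of length $2n$ is a permutation $\pi\in\mathfrak S_{2n}$ such that for every $i=1,\dots,2n$: if $\pi(i)$ is even then $i<2n$ and $\pi(i)>\pi(i+1)$; if $\pi(i)$ is odd then $i=2n$ or $\pi(i)<\pi(i+1)$. $\mathfrak D^1_{2n}$ denotes the set of these ($\mathfrak D^1_0$ consists of the empty permutation). A permutation $\sigma$ contains a pattern $\tau\in\mathfrak S_k$ if some subsequence $(\sigma(i_1),\dots,\sigma(i_k))$, $i_1<\dots<i_k$, is order-isomorphic to $\tau$; otherwise $\sigma$ avoids $\tau$. $\mathfrak D^1_{2n}(T)$ denotes the set of permutations in $\mathfrak D^1_{2n}$ avoiding every pattern in $T$. *)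

(* Defs.v *)
From mathcomp Require Import all_boot all_fingroup.
Set Implicit Arguments. Unset Strict Implicit. Unset Printing Implicit Defensive.

(* one-line notation of a permutation of {1..m}: the i-th entry is sigma(i),
   with values shifted to 1..m (so parity matches the paper) *)
Definition perm_seq (m : nat) (s : 'S_m) : seq nat :=
  [seq (val (s i)).+1 | i <- enum 'I_m].

(* Dumont permutation of the first kind (positions 0-based, values 1-based):
   an even value is followed by a smaller one (and is not last);
   an odd value is last or followed by a larger one. *)
Definition dumont1 (w : seq nat) : bool :=
  [forall i : 'I_(size w),
     if ~~ odd (nth 0 w i) then (i.+1 < size w) && (nth 0 w i.+1 < nth 0 w i)
     else (i.+1 == size w) || (nth 0 w i < nth 0 w i.+1)].

Definition order_iso (t p : seq nat) : bool :=
  (size t == size p) &&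
  [forall i : 'I_(size p), forall j : 'I_(size p),
     (nth 0 t i < nth 0 t j) == (nth 0 p i < nth 0 p j)].

Definition contains (w p : seq nat) : bool :=
  [exists m : (size w).-tuple bool, order_iso (mask m w) p].

Definition numD1 (p : seq nat) (n : nat) : nat :=
  #|[set s : 'S_(n.*2) | dumont1 (perm_seq s) && ~~ contains (perm_seq s) p]|.

(* Main.v *)
Require Import Defs.
From mathcomp Require Import all_boot all_fingroup zify.
Set Implicit Arguments. Unset Strict Implicit. Unset Printing Implicit Defensive.


Definition isperm m (w : seq nat) := [&& uniq w, size w == m & all (fun x => 0 < x <= m) w].

Lemma ispermP m w : perm_eq w (iota 1 m) = isperm m w.
Proof.
apply/idP/idP.
  move=> H; rewrite /isperm (perm_uniq H) iota_uniq (perm_size H) size_iota eqxx /=.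
  apply/allP=> x; rewrite (perm_mem H) mem_iota; lia.
case/and3P=> Hu /eqP Hs /allP Ha; apply: uniq_perm => //; first exact: iota_uniq.
have sub : {subset w <= iota 1 m} by move=> x /Ha; rewrite mem_iota; lia.
move=> x; apply/idP/idP; first exact: sub.
by rewrite -(uniq_min_size Hu sub) // size_iota Hs.
Qed.

Lemma perm_seq_inj m : injective (@perm_seq m).
Proof.
move=> s t H; apply/permP=> i.
have := congr1 (fun l => nth 0 l i) H.
rewrite /perm_seq !(nth_map i) -?enumT ?size_enum_ord ?ltn_ord // nth_ord_enum.
by move=> [] /val_inj.
Qed.

Lemma mem_perm_seq m w : (w \in map (@perm_seq m) (enum 'S_m)) = perm_eq w (iota 1 m).
Proof.
rewrite ispermP; apply/idP/idP.
  case/mapP=> s _ ->; rewrite /isperm /perm_seq size_map size_enum_ord eqxx /=.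
  rewrite map_inj_uniq ?enum_uniq; last by move=> i j [] /val_inj /perm_inj.
  apply/allP=> x /mapP [i _ ->]; have := ltn_ord (s i); lia.
case/and3P=> Hu /eqP Hs /allP Ha.
pose f (i : 'I_m) : 'I_m := insubd i (nth 0 w i).-1.
have Hf (i : 'I_m) : val (f i) = (nth 0 w i).-1.
  rewrite val_insubd; have : nth 0 w i \in w by rewrite mem_nth // Hs.
  by move/Ha; case: ifP => //; lia.
have finj : injective f.
  move=> i j /(congr1 val); rewrite !Hf => E; apply/val_inj.
  have Hi : nth 0 w i \in w by rewrite mem_nth // Hs.
  have Hj : nth 0 w j \in w by rewrite mem_nth // Hs.
  move: (Ha _ Hi) (Ha _ Hj) => H1 H2.
  have E' : nth 0 w i = nth 0 w j by lia.
  by apply/eqP; rewrite -(nth_uniq 0 _ _ Hu) ?Hs ?ltn_ord // E'.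
apply/mapP; exists (perm finj); first by rewrite mem_enum.
rewrite /perm_seq.
have -> : [seq (val (perm finj i)).+1 | i <- enum 'I_m] = [seq nth 0 w k | k <- iota 0 m].
  rewrite -val_enum_ord -map_comp; apply: eq_map => i /=; rewrite permE Hf.
  have Hi : nth 0 w i \in w by rewrite mem_nth // Hs.
  move: (Ha _ Hi); lia.
by rewrite -Hs -/(mkseq _ _) mkseq_nth.
Qed.

Lemma card_count m (Q : pred (seq nat)) :
  #|[set s : 'S_m | Q (perm_seq s)]| = count Q (permutations (iota 1 m)).
Proof.
rewrite cardsE cardE /enum_mem size_filter -enumT.
have -> : count (mem (fun s : 'S_m => Q (perm_seq s))) (enum 'S_m) = count Q (map (@perm_seq m) (enum 'S_m)).
  by rewrite count_map.
suff /seq.permP -> : perm_eq (map (@perm_seq m) (enum 'S_m)) (permutations (iota 1 m)) by [].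
apply: uniq_perm.
- by rewrite map_inj_uniq ?enum_uniq //; exact: perm_seq_inj.
- exact: permutations_uniq.
- by move=> w; rewrite mem_perm_seq mem_permutations.
Qed.


Definition rD (x y : nat) := if odd x then x < y else y < x.
Definition dum (w : seq nat) := if w is x :: t then path rD x t && odd (last x t) else true.

Definition Pd (w : seq nat) (i : nat) :=
  if ~~ odd (nth 0 w i) then (i.+1 < size w) && (nth 0 w i.+1 < nth 0 w i)
  else (i.+1 == size w) || (nth 0 w i < nth 0 w i.+1).

Lemma forall_iota n (Q : pred nat) : [forall i : 'I_n, Q i] = all Q (iota 0 n).
Proof.
apply/forallP/allP => H.
  by move=> x; rewrite mem_iota => /andP[_ Hx]; exact: (H (Ordinal Hx)).
by move=> i; apply: H; rewrite mem_iota ltn_ord.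
Qed.

Lemma dumontE w : dumont1 w = dum w.
Proof.
have -> : dumont1 w = all (Pd w) (iota 0 (size w)) by apply: forall_iota.
elim: w => [|x t IH] //=.
rewrite -addn1 addnC iotaDl all_map.
have -> : all (preim (addn 1) (Pd (x :: t))) (iota 0 (size t)) = all (Pd t) (iota 0 (size t)).
  apply: eq_all => i /=; rewrite /Pd /= add1n ltnS eqSS //.
rewrite IH; case: t {IH} => [|y t] /=; rewrite /Pd /=.
  by case: (odd x).
by rewrite /rD; case: (odd x) => /=; rewrite ?andbA.
Qed.


Lemma containsP w p : reflect (exists2 s, subseq s w & order_iso s p) (contains w p).
Proof.
apply: (iffP existsP).
  by case=> m H; exists (mask m w) => //; exact: mask_subseq.
case=> s /subseqP [m Hm ->] H.
have Hm' : size m == size w by rewrite Hm.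
by exists (Tuple Hm').
Qed.

Lemma order_iso_size s p : order_iso s p -> size s = size p.
Proof. by case/andP=> /eqP. Qed.

Lemma oiso_gen a b c d (p : seq nat) : size p = 4 ->
  order_iso [:: a; b; c; d] p =
  [forall i : 'I_4, forall j : 'I_4,
     (nth 0 [:: a; b; c; d] i < nth 0 [:: a; b; c; d] j) == (nth 0 p i < nth 0 p j)].
Proof. by move=> Hp; rewrite /order_iso Hp. Qed.

Lemma fa4 (P : 'I_4 -> 'I_4 -> bool) : [forall i, forall j, P i j] -> forall i j, P i j.
Proof. by move=> /forallP H i j; exact: (forallP (H i)). Qed.

Lemma oiso4213 a b c d : order_iso [:: a; b; c; d] [:: 4; 2; 1; 3] = [&& c < b, b < d & d < a].
Proof. rewrite oiso_gen //; apply/idP/idP;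
  [ move=> /fa4 h;
    move: (h (@Ordinal 4 0 isT) (@Ordinal 4 1 isT)) (h (@Ordinal 4 0 isT) (@Ordinal 4 2 isT))
          (h (@Ordinal 4 0 isT) (@Ordinal 4 3 isT)) (h (@Ordinal 4 1 isT) (@Ordinal 4 2 isT))
          (h (@Ordinal 4 1 isT) (@Ordinal 4 3 isT)) (h (@Ordinal 4 2 isT) (@Ordinal 4 3 isT))
          (h (@Ordinal 4 1 isT) (@Ordinal 4 0 isT)) (h (@Ordinal 4 2 isT) (@Ordinal 4 0 isT))
          (h (@Ordinal 4 3 isT) (@Ordinal 4 0 isT)) (h (@Ordinal 4 2 isT) (@Ordinal 4 1 isT))
          (h (@Ordinal 4 3 isT) (@Ordinal 4 1 isT)) (h (@Ordinal 4 3 isT) (@Ordinal 4 2 isT));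
    rewrite /= => /eqP ? /eqP ? /eqP ? /eqP ? /eqP ? /eqP ? /eqP ? /eqP ? /eqP ? /eqP ? /eqP ? /eqP ?;
    apply/and3P; split; lia
  | move=> /and3P [? ? ?]; apply/forallP => i; apply/forallP => j;
    case: i => [[|[|[|[|i]]]] Hi] //; case: j => [[|[|[|[|j]]]] Hj] //=; apply/eqP; lia ]. Qed.

Lemma oiso1342 a b c d : order_iso [:: a; b; c; d] [:: 1; 3; 4; 2] = [&& a < d, d < b & b < c].
Proof. rewrite oiso_gen //; apply/idP/idP;
  [ move=> /fa4 h;
    move: (h (@Ordinal 4 0 isT) (@Ordinal 4 1 isT)) (h (@Ordinal 4 0 isT) (@Ordinal 4 2 isT))
          (h (@Ordinal 4 0 isT) (@Ordinal 4 3 isT)) (h (@Ordinal 4 1 isT) (@Ordinal 4 2 isT))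
          (h (@Ordinal 4 1 isT) (@Ordinal 4 3 isT)) (h (@Ordinal 4 2 isT) (@Ordinal 4 3 isT))
          (h (@Ordinal 4 1 isT) (@Ordinal 4 0 isT)) (h (@Ordinal 4 2 isT) (@Ordinal 4 0 isT))
          (h (@Ordinal 4 3 isT) (@Ordinal 4 0 isT)) (h (@Ordinal 4 2 isT) (@Ordinal 4 1 isT))
          (h (@Ordinal 4 3 isT) (@Ordinal 4 1 isT)) (h (@Ordinal 4 3 isT) (@Ordinal 4 2 isT));
    rewrite /= => /eqP ? /eqP ? /eqP ? /eqP ? /eqP ? /eqP ? /eqP ? /eqP ? /eqP ? /eqP ? /eqP ? /eqP ?;
    apply/and3P; split; lia
  | move=> /and3P [? ? ?]; apply/forallP => i; apply/forallP => j;
    case: i => [[|[|[|[|i]]]] Hi] //; case: j => [[|[|[|[|j]]]] Hj] //=; apply/eqP; lia ]. Qed.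


Definition p4213 := [:: 4; 2; 1; 3].
Definition p1342 := [:: 1; 3; 4; 2].

Lemma c4213P w : reflect (exists a b c d, subseq [:: a; b; c; d] w /\ [/\ c < b, b < d & d < a])
  (contains w p4213).
Proof.
apply: (iffP (containsP _ _)).
  case=> s Hs Ho; have := order_iso_size Ho.
  case: s Hs Ho => [|a [|b [|c [|d [|? ?]]]]] //= Hs Ho _.
  by exists a, b, c, d; split=> //; move: Ho; rewrite oiso4213 => /and3P[].
case=> a [b [c [d [Hs [H1 H2 H3]]]]]; exists [:: a; b; c; d] => //.
by rewrite oiso4213 H1 H2 H3.
Qed.

Lemma c1342P w : reflect (exists a b c d, subseq [:: a; b; c; d] w /\ [/\ a < d, d < b & b < c])
  (contains w p1342).
Proof.
apply: (iffP (containsP _ _)).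
  case=> s Hs Ho; have := order_iso_size Ho.
  case: s Hs Ho => [|a [|b [|c [|d [|? ?]]]]] //= Hs Ho _.
  by exists a, b, c, d; split=> //; move: Ho; rewrite oiso1342 => /and3P[].
case=> a [b [c [d [Hs [H1 H2 H3]]]]]; exists [:: a; b; c; d] => //.
by rewrite oiso1342 H1 H2 H3.
Qed.

Lemma subseq_cat_split (s x y : seq nat) : subseq s (x ++ y) ->
  exists s1 s2, [/\ s = s1 ++ s2, subseq s1 x & subseq s2 y].
Proof.
case/subseqP=> m Hm ->; rewrite size_cat in Hm.
exists (mask (take (size x) m) x), (mask (drop (size x) m) y); split.
- by rewrite -mask_cat ?cat_take_drop // size_takel // Hm leq_addr.
- exact: mask_subseq.
- exact: mask_subseq.
Qed.

Lemma subseq_map_inv (f : nat -> nat) s t : subseq s (map f t) ->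
  exists2 s', s = map f s' & subseq s' t.
Proof. by case/subseqP=> m Hm ->; exists (mask m t); [rewrite map_mask | exact: mask_subseq]. Qed.

Lemma head4 (a b c d : nat) s1 s2 : [:: a; b; c; d] = s1 ++ s2 -> s1 != [::] -> a \in s1.
Proof. by case: s1 => [|x s1] //= [] ->; rewrite inE eqxx. Qed.

Lemma last4 (a b c d : nat) s1 s2 : [:: a; b; c; d] = s1 ++ s2 -> s2 != [::] -> d \in s2.
Proof.
move=> E N; have : last 0 [:: a; b; c; d] = last 0 (s1 ++ s2) by rewrite E.
rewrite last_cat /= => ->; case: s2 N {E} => [|y t] //= _.
exact: mem_last.
Qed.

Definition build (sg be : seq nat) :=
  [seq size sg + 3 - x | x <- sg] ++ 2 :: 1 :: [seq x + (size sg + 2) | x <- be].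

Lemma cont_build sg be :
  (forall x, x \in sg -> 0 < x <= size sg) -> (forall x, x \in be -> 0 < x) ->
  contains (build sg be) p4213 = contains sg p1342 || contains be p4213.
Proof.
move=> Hs Hb; set s := size sg.
apply/idP/idP.
- case/c4213P=> a [b [c [d [Hsub [H1 H2 H3]]]]].
  move: Hsub; rewrite /build -/s -[2 :: 1 :: _]/([:: 2; 1] ++ _) catA.
  case/subseq_cat_split => s1 [s2 [E Hs1 Hs2]].
  have Hl : forall x, x \in s1 -> 0 < x <= s + 2.
    move=> x /(mem_subseq Hs1); rewrite mem_cat => /orP [/mapP [y /Hs Hy ->]|]; first lia.
    rewrite !inE => /orP [] /eqP ->; lia.
  have Hr : forall x, x \in s2 -> s + 3 <= x.
    by move=> x /(mem_subseq Hs2) /mapP [y /Hb Hy ->]; lia.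
  case: (s1 =P [::]) => [E1|/eqP N1].
    move: E Hs2; rewrite E1 /= => <- /subseq_map_inv [s' Es' Hs'].
    case: s' Es' Hs' => [|a' [|b' [|c' [|d' [|? ?]]]]] //= [] Ea Eb Ec Ed Hs'.
    apply/orP; right; apply/c4213P; exists a', b', c', d'; split=> //; split; lia.
  case: (s2 =P [::]) => [E2|/eqP N2]; last first.
    have := Hl _ (head4 E N1); have := Hr _ (last4 E N2); lia.
  move: E Hs1; rewrite E2 cats0 => E; rewrite -E.
  case/subseq_cat_split => t1 [t2 [F Ht1 Ht2]].
  case: (t2 =P [::]) => [F2|/eqP N2]; last first.
    have : d \in [:: 2; 1] := mem_subseq Ht2 (last4 F N2).
    have : c \in s1 by rewrite -E !inE eqxx !orbT.
    move/Hl; rewrite !inE => ? /orP [] /eqP ?; lia.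
  move: F Ht1; rewrite F2 cats0 => <- /subseq_map_inv [s' Es' Hs'].
  case: s' Es' Hs' => [|a' [|b' [|c' [|d' [|? ?]]]]] //= [] Ea Eb Ec Ed Hs'.
  have Hall : forall x, x \in [:: a'; b'; c'; d'] -> 0 < x <= s := fun x h => Hs x (mem_subseq Hs' h).
  move: (Hall a') (Hall b') (Hall c') (Hall d'); rewrite !inE !eqxx ?orbT /=.
  move=> /(_ isT) ? /(_ isT) ? /(_ isT) ? /(_ isT) ?.
  apply/orP; left; apply/c1342P; exists a', b', c', d'; split=> //; split; lia.
- case/orP.
    case/c1342P=> a [b [c [d [Hsub [H1 H2 H3]]]]].
    have Hall : forall x, x \in [:: a; b; c; d] -> 0 < x <= s := fun x h => Hs x (mem_subseq Hsub h).
    move: (Hall a) (Hall b) (Hall c) (Hall d); rewrite !inE !eqxx ?orbT /=.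
    move=> /(_ isT) ? /(_ isT) ? /(_ isT) ? /(_ isT) ?.
    apply/c4213P; exists (s + 3 - a), (s + 3 - b), (s + 3 - c), (s + 3 - d); split; last by split; lia.
    rewrite /build; apply: (subseq_trans _ (prefix_subseq _ _)).
    exact: (map_subseq (fun x => s + 3 - x) Hsub).
  case/c4213P=> a [b [c [d [Hsub [H1 H2 H3]]]]].
  apply/c4213P; exists (a + (s + 2)), (b + (s + 2)), (c + (s + 2)), (d + (s + 2)); split; last by split; lia.
  rewrite /build; apply: (subseq_trans _ (suffix_subseq _ _)).
  apply: (subseq_trans _ (suffix_subseq [:: 2; 1] _)).
  exact: (map_subseq (fun x => x + (s + 2)) Hsub).
Qed.


Definition Cpart (u : seq nat) := if u is x :: t then path rD x t && rD (last x t) 2 else true.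
Definition Dpart (v : seq nat) := path rD 1 v && odd (last 1 v).

Lemma rD21 : rD 2 1. Proof. by []. Qed.

Lemma dum_split u v : dum (u ++ 2 :: 1 :: v) = Cpart u && Dpart v.
Proof.
case: u => [|x t] /=; rewrite /Dpart.
  by [].
rewrite cat_path last_cat /=.
by rewrite !andbA.
Qed.

Lemma Cpart_map s sg : ~~ odd s -> (forall x, x \in sg -> 0 < x <= s) ->
  Cpart [seq s + 3 - x | x <- sg] = dum sg.
Proof.
move=> Hs H; case: sg H => [|x t] H //=.
rewrite path_map last_map.
have E : {in [pred y | 0 < y <= s] &, relpre (fun y => s + 3 - y) rD =2 rD}.
  move=> a b; rewrite !inE /= => Ha Hb; rewrite /rD /=.
  case Ho: (odd a); case Ho': (odd (s + 3 - a)); lia.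
rewrite (eq_in_path E); last by apply/allP => y Hy; exact: H.
congr andb.
have := H _ (mem_last x t); rewrite /rD.
case Ho: (odd (last x t)); case Ho': (odd (s + 3 - last x t)); lia.
Qed.

Lemma Dpart_map c be : ~~ odd c -> 0 < c -> Dpart [seq x + c | x <- be] = dum be.
Proof.
move=> Hc Hc0; case: be => [|b t] //=.
rewrite /Dpart /= (@path_map _ _ (fun x => x + c) rD b t) (@last_map _ _ (fun x => x + c)).
have -> : rD 1 (b + c) = true by rewrite /rD /=; lia.
have E : relpre (fun y => y + c) rD =2 rD.
  move=> a a' /=; rewrite /rD.
  case Ho: (odd a); case Ho': (odd (a + c)); lia.
rewrite (eq_path E) /=.
congr andb; lia.
Qed.

Lemma path_odd_next x t z : path rD x t -> rD (last x t) z ->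
  forall y, y \in x :: t -> odd y -> exists2 z', z' \in t ++ [:: z] & y < z'.
Proof.
elim: t x => [|a t IH] x /=.
  move=> _ Hl y; rewrite inE => /eqP -> Ho; exists z; first by rewrite inE.
  by move: Hl; rewrite /rD Ho.
case/andP=> Hxa Hp Hl y; rewrite inE => /orP [/eqP ->|Hy] Ho.
  exists a; first by rewrite inE eqxx.
  by move: Hxa; rewrite /rD Ho.
have [z' Hz' Hyz] := IH a Hp Hl y Hy Ho.
by exists z' => //; rewrite inE Hz' orbT.
Qed.

Lemma dum_mid u x v : dum (u ++ x :: v) -> if v is y :: _ then rD x y else odd x.
Proof.
case: u => [|a u] /=.
  case: v => [|y v] /=; first by [].
  by case/andP => /andP [].
rewrite cat_path last_cat => /andP [/andP [_ H] L].
case: v H L => [|y v] /=; first by [].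
by case/and3P.
Qed.

Lemma build_inj (sg be sg' be' : seq nat) :
  (forall x, x \in sg -> 0 < x <= size sg) -> (forall x, x \in sg' -> 0 < x <= size sg') ->
  build sg be = build sg' be' -> sg = sg' /\ be = be'.
Proof.
move=> Hs Hs' E.
have HI : forall s b : seq nat, (forall x, x \in s -> 0 < x <= size s) -> index 2 (build s b) = size s.
  move=> s b H; rewrite /build index_cat size_map /= addn0.
  case: ifP => // /mapP [y /H Hy Ey]; lia.
have Es : size sg = size sg' by rewrite -(HI sg be Hs) E HI.
have E1 : [seq size sg + 3 - x | x <- sg] = [seq size sg + 3 - x | x <- sg'].
  have := congr1 (take (size sg)) E.
  by rewrite /build !take_size_cat ?size_map // Es.
have Esg : sg = sg'.
  have K : forall s : seq nat, (forall x, x \in s -> 0 < x <= size sg) ->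
      [seq size sg + 3 - x | x <- [seq size sg + 3 - x | x <- s]] = s.
    move=> s H; rewrite -map_comp -{2}(map_id s); apply/eq_in_map => y /H /=; lia.
  rewrite -(K sg Hs) -(K sg') ?E1 // Es //.
split=> //; move: E; rewrite /build -Esg => /eqP; rewrite eqseq_cat ?size_map //.
case/andP=> _ /eqP [] /inj_map; apply; exact: addIn.
Qed.


Lemma isperm_range m (w : seq nat) x : isperm m w -> x \in w -> 0 < x <= m.
Proof. by case/and3P=> _ _ /allP; apply. Qed.

Lemma isperm_size m (w : seq nat) : isperm m w -> size w = m.
Proof. by case/and3P=> _ /eqP. Qed.

Lemma isperm_uniq m (w : seq nat) : isperm m w -> uniq w.
Proof. by case/and3P. Qed.

Lemma build_ok j k (sg be : seq nat) : isperm j.*2 sg -> isperm k.*2 be ->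
  dum sg -> ~~ contains sg p1342 -> dum be -> ~~ contains be p4213 ->
  [&& isperm (j + k).+1.*2 (build sg be), dum (build sg be) & ~~ contains (build sg be) p4213].
Proof.
move=> Ps Pb Ds Cs Db Cb.
have Ssg := isperm_size Ps.
have Hs x : x \in sg -> 0 < x <= j.*2 := isperm_range Ps.
have Hb x : x \in be -> 0 < x <= k.*2 := isperm_range Pb.
apply/and3P; split.
- rewrite /isperm /build size_cat /= !size_map Ssg (isperm_size Pb).
  apply/and3P; split.
  + rewrite cat_uniq /= map_inj_in_uniq ?(isperm_uniq Ps); last first.
      by move=> a b /Hs ? /Hs ? /=; lia.
    rewrite map_inj_uniq ?(isperm_uniq Pb); last by move=> a b /=; lia.
    rewrite !inE !andbT /=.
    apply/and3P; split.
    * rewrite !negb_or; apply/and3P; split.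
      -- by apply/mapP => [[y /Hs ? ?]]; lia.
      -- by apply/mapP => [[y /Hs ? ?]]; lia.
      -- apply/hasPn => z /mapP [y /Hb ? ->]; apply/mapP => [[y' /Hs ? ?]]; lia.
    * by apply/mapP => [[y /Hb ? ?]]; lia.
    * by apply/mapP => [[y /Hb ? ?]]; lia.
  + apply/eqP; lia.
  + apply/allP => x; rewrite mem_cat !inE => /orP [/mapP [y /Hs ? ->]|/orP [/eqP ->|/orP [/eqP ->|/mapP [y /Hb ? ->]]]]; lia.
- rewrite /build dum_split Ssg Cpart_map ?Dpart_map ?Ds ?Db //; try lia.
- rewrite cont_build ?negb_or ?Cs ?Cb //.
    by rewrite Ssg.
  by move=> x /Hb /andP [].
Qed.


Ltac slia :=
  repeat match goal with
  | H : is_true ?b |- _ =>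
      lazymatch b with
      | context [leq _ _] => fail
      | context [odd _] => fail
      | context [eq_op _ _] => fail
      | _ => clear H
      end
  | H : forall _, _ |- _ => clear H
  | H : _ =i _ |- _ => clear H
  | H : @eq (seq nat) _ _ |- _ => clear H
  | H : @eq (list nat) _ _ |- _ => clear H
  end; lia.

Lemma decomp n (pi : seq nat) : isperm (n.+1).*2 pi -> dum pi -> ~~ contains pi p4213 ->
  exists k, exists sg be,
    [/\ k <= n, pi = build sg be, isperm (n - k).*2 sg & isperm k.*2 be] /\
    [/\ dum sg, ~~ contains sg p1342, dum be & ~~ contains be p4213].
Proof.
move=> Pp Dp Cp.
have Hmem : pi =i iota 1 (n.+1).*2 by apply: perm_mem; rewrite ispermP.
have Hr x : x \in pi -> 0 < x <= (n.+1).*2 := isperm_range Pp.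
have Up := isperm_uniq Pp.
have H2 : 2 \in pi by rewrite Hmem mem_iota; slia.
have [u [w E]] : exists u w, pi = u ++ 2 :: 1 :: w.
  set j := index 2 pi.
  have Hj : j < size pi by rewrite index_mem.
  have Hn : nth 0 pi j = 2 := nth_index 0 H2.
  have E0 : pi = take j pi ++ 2 :: drop j.+1 pi.
    by rewrite -Hn -drop_nth // cat_take_drop.
  move: Dp; rewrite E0 => /dum_mid.
  case Ev: (drop j.+1 pi) => [|y w] //= Hy.
  have : y \in pi by rewrite E0 Ev mem_cat !inE eqxx !orbT.
  move/Hr => Hy'.
  have Ey : y = 1 by move: Hy; rewrite /rD /=; slia.
  by exists (take j pi), w; rewrite E0 Ev Ey.
have Uc := Up; rewrite E cat_uniq in Uc.
case/and3P: Uc => Uu /hasPn Hdis /= /andP [n2w /andP [n1w Uw]].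
have Hin x : x \in u -> x \in pi by move=> Hx; rewrite E mem_cat Hx.
have Hinw x : x \in w -> x \in pi by move=> Hx; rewrite E mem_cat !inE Hx !orbT.
have Hu x : x \in u -> 3 <= x <= (n.+1).*2.
  move=> Hx; have := Hr _ (Hin _ Hx).
  have := Hdis 2; have := Hdis 1; rewrite !inE !eqxx /=.
  move=> /(_ isT) N1 /(_ isT) N2.
  case: (x =P 1) => [E1|]; first by move: N1; rewrite -E1 Hx.
  case: (x =P 2) => [E1|]; first by move: N2; rewrite -E1 Hx.
  slia.
have Hd x : x \in u -> x \notin w.
  by move=> Hx; apply/negP => Hxw; have := Hdis x; rewrite !inE Hxw !orbT Hx => /(_ isT).
have Hw x : x \in w -> 3 <= x <= (n.+1).*2.
  move=> Hx; have := Hr _ (Hinw _ Hx).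
  case: (x =P 1) => [E1|]; first by move: n1w; rewrite -E1 Hx.
  case: (x =P 2) => [E1|]; first by move: n2w; rewrite -E1 inE Hx orbT.
  slia.
have Hlt y z : y \in u -> z \in w -> y < z.
  move=> Hy Hz; rewrite ltnNge leq_eqVlt; apply/negP => /orP [/eqP Ez | Lz].
    by move: (Hd _ Hy); rewrite -Ez Hz.
  apply: (negP Cp); apply/c4213P; exists y, 2, 1, z; split; last first.
    by have := Hw _ Hz; split; slia.
  rewrite E -[ [:: y; 2; 1; z] ]/([:: y] ++ [:: 2; 1] ++ [:: z]).
  apply: cat_subseq; first by rewrite sub1seq.
  rewrite -[2 :: 1 :: w]/([:: 2; 1] ++ w).
  by apply: cat_subseq; rewrite ?sub1seq.
set j := size u.
have Hub y : y \in u -> y <= j + 2.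
  move=> Hy; rewrite leqNgt; apply/negP => Lt.
  have sub : {subset iota 3 (y - 2) <= u}.
    move=> v; rewrite mem_iota => Hv.
    have : v \in pi by rewrite Hmem mem_iota; have := Hu _ Hy; slia.
    rewrite E mem_cat !inE => /orP [//|/orP [/eqP ?|/orP [/eqP ?|Hvw]]]; try slia.
    have := Hlt _ _ Hy Hvw; slia.
  have := uniq_leq_size (iota_uniq 3 (y - 2)) sub; rewrite size_iota -/j; slia.
have Hset : u =i iota 3 j.
  have sub : {subset u <= iota 3 j}.
    by move=> x Hx; rewrite mem_iota; have := Hu _ Hx; have := Hub _ Hx; slia.
  have Hle : size (iota 3 j) <= size u by rewrite size_iota.
  by case: (uniq_min_size Uu sub Hle).
have Hwl z : z \in w -> j + 3 <= z.
  move=> Hz; rewrite leqNgt; apply/negP => L.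
  have : z \in u by rewrite Hset mem_iota; have := Hw _ Hz; slia.
  by move/Hd; rewrite Hz.
have Spi : size pi = (n.+1).*2 := isperm_size Pp.
have Sw : size w + j + 2 = (n.+1).*2.
  rewrite -Spi E size_cat /=; slia.
have := Dp; rewrite E dum_split => /andP [Cu Dw].
have Ej : ~~ odd j.
  apply/negP => Oj.
  have Hm : j + 2 \in u by rewrite Hset mem_iota; slia.
  move: Cu Hm; rewrite /Cpart; case Eu: u => [|x t] //.
  case/andP => Hp Hl Hm.
  have [z' Hz' Lz'] := path_odd_next Hp Hl Hm (ltac:(rewrite oddD Oj //)).
  move: Hz'; rewrite mem_cat inE => /orP [Hzt|/eqP Ez]; last slia.
  have : z' \in u by rewrite Eu inE Hzt orbT.
  move/Hub; slia.
have [h Eh] : exists h, j = h.*2.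
  by exists j./2; rewrite -[LHS](odd_double_half j) (negbTE Ej).
exists (n - h), [seq j + 3 - x | x <- u], [seq x - (j + 2) | x <- w].
set sg := [seq j + 3 - x | x <- u]; set be := [seq x - (j + 2) | x <- w].
have Hsg x : x \in sg -> 0 < x <= j.
  by case/mapP => y Hy ->; have := Hu _ Hy; have := Hub _ Hy; slia.
have Hbe x : x \in be -> 0 < x <= size w.
  by case/mapP => z Hz ->; have := Hw _ Hz; have := Hwl _ Hz; slia.
have Ssg : size sg = j by rewrite size_map.
have Eu' : u = [seq j + 3 - x | x <- sg].
  rewrite /sg -map_comp -{1}(map_id u); apply/eq_in_map => y Hy /=.
  by have := Hu _ Hy; have := Hub _ Hy; slia.
have Ew' : w = [seq x + (j + 2) | x <- be].
  rewrite /be -map_comp -{1}(map_id w); apply/eq_in_map => y Hy /=.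
  by have := Hwl _ Hy; slia.
have Eb : u ++ 2 :: 1 :: w = build sg be by rewrite /build Ssg -Eu' -Ew'.
have Hsg' : forall x, x \in sg -> 0 < x <= size sg by rewrite Ssg.
have Hbe' : forall x, x \in be -> 0 < x by move=> x /Hbe /andP [].
have := Cp; rewrite E Eb cont_build // negb_or => /andP [Cs Cb].
have Hnk : (n - (n - h)).*2 = j by slia.
have Hk : (n - h).*2 = size w by slia.
split; split.
- exact: leq_subr.
- by rewrite ?Eb.
- rewrite Hnk; apply/and3P; split.
  + rewrite map_inj_in_uniq // => a b Ha Hb /=.
    by have := Hu _ Ha; have := Hub _ Ha; have := Hu _ Hb; have := Hub _ Hb; slia.
  + by rewrite Ssg.
  + by apply/allP.
- rewrite Hk; apply/and3P; split.
  + rewrite map_inj_in_uniq // => a b Ha Hb /=.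
    by have := Hwl _ Ha; have := Hwl _ Hb; slia.
  + by rewrite size_map.
  + by apply/allP.
- by rewrite -(Cpart_map Ej Hsg) -Eu'.
- exact: Cs.
- rewrite -(@Dpart_map (j + 2)) -?Ew' //; slia.
- exact: Cb.
Qed.


Lemma uniq_flatten_key (T : eqType) (s : seq nat) (F : nat -> seq T) (key : T -> nat) (h : nat -> nat) :
  uniq [seq h k | k <- s] -> (forall k, k \in s -> uniq (F k)) ->
  (forall k x, k \in s -> x \in F k -> key x = h k) -> uniq (flatten [seq F k | k <- s]).
Proof.
elim: s => [|k s IH] //= /andP [Hn Hu] HF Hk.
rewrite cat_uniq HF ?mem_head //= IH //; first last.
- by move=> k' x Hk' Hx; apply: Hk => //; rewrite inE Hk' orbT.
- by move=> k' Hk'; apply: HF; rewrite inE Hk' orbT.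
rewrite andbT; apply/hasPn => x /flatten_mapP [k' Hk' Hx]; apply/negP => Hx'.
have E1 := Hk k x (mem_head _ _) Hx'.
have E2 : key x = h k' by apply: Hk => //; rewrite inE Hk' orbT.
by move: Hn; rewrite -E1 E2 map_f.
Qed.

Lemma index_build (sg be : seq nat) : (forall x, x \in sg -> 0 < x <= size sg) ->
  index 2 (build sg be) = size sg.
Proof.
move=> H; rewrite /build index_cat size_map /= addn0.
case: ifP => // /mapP [y /H Hy Ey]; lia.
Qed.

Definition QA (w : seq nat) := dumont1 w && ~~ contains w p4213.
Definition QB (w : seq nat) := dumont1 w && ~~ contains w p1342.
Definition FA m := filter QA (permutations (iota 1 m)).
Definition FB m := filter QB (permutations (iota 1 m)).

Lemma memF (Q : pred (seq nat)) m w : (w \in filter Q (permutations (iota 1 m))) = Q w && isperm m w.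
Proof. by rewrite mem_filter mem_permutations ispermP. Qed.

Lemma main_count n :
  size (FA (n.+1).*2) = \sum_(k < n.+1) size (FA k.*2) * size (FB (n - k).*2).
Proof.
pose F k := [seq build x y | x <- FB (n - k).*2, y <- FA k.*2].
pose L := flatten [seq F k | k <- iota 0 n.+1].
have SL : size L = \sum_(k < n.+1) size (FA k.*2) * size (FB (n - k).*2).
  rewrite size_flatten /shape -map_comp sumnE big_map.
  have -> : iota 0 n.+1 = index_iota 0 n.+1 by rewrite /index_iota subn0.
  rewrite big_mkord.
  by apply: eq_bigr => k _; rewrite /= size_allpairs mulnC.
rewrite -SL; apply/esym/perm_size; apply: uniq_perm.
- apply: (@uniq_flatten_key _ _ F (index 2) (fun k => (n - k).*2)).
  + rewrite map_inj_in_uniq ?iota_uniq // => a b; rewrite !mem_iota; lia.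
  + move=> k _; apply: allpairs_uniq; rewrite ?filter_uniq ?permutations_uniq //.
    move=> [s1 b1] [s2 b2] /allpairsP [[x y] [/= Hx Hy [-> ->]]] /allpairsP [[x' y'] [/= Hx' Hy' [-> ->]]] /= E.
    move: Hx Hx'; rewrite /FB !memF => /andP [_ Px] /andP [_ Px'].
    have Hx1 : forall z, z \in x -> 0 < z <= size x.
      by move=> z; rewrite (isperm_size Px); exact: isperm_range Px.
    have Hx2 : forall z, z \in x' -> 0 < z <= size x'.
      by move=> z; rewrite (isperm_size Px'); exact: isperm_range Px'.
    by case: (build_inj Hx1 Hx2 E) => -> ->.
  + move=> k z _ /allpairsP [[x y] [/= Hx Hy ->]].
    move: Hx; rewrite /FB memF => /andP [_ Px].
    rewrite index_build; first exact: isperm_size Px.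
    by move=> v; rewrite (isperm_size Px); exact: isperm_range Px.
- by rewrite filter_uniq ?permutations_uniq.
- move=> w; apply/idP/idP.
  + case/flatten_mapP => k; rewrite mem_iota => Hk /allpairsP [[x y] [/= Hx Hy ->]].
    move: Hx Hy; rewrite /FB /FA !memF /QA /QB !dumontE => /andP [/andP [Dx Cx] Px] /andP [/andP [Dy Cy] Py].
    have := build_ok Px Py Dx Cx Dy Cy.
    have -> : (n - k + k).+1 = n.+1 by lia.
    by case/and3P => -> -> ->.
  + rewrite /FA memF /QA dumontE => /andP [/andP [Dw Cw] Pw].
    have [k [sg [be [[Hk -> Psg Pbe] [Ds Cs Db Cb]]]]] := decomp Pw Dw Cw.
    apply/flatten_mapP; exists k; first by rewrite mem_iota; lia.
    apply/allpairsP; exists (sg, be); split=> //=.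
      by rewrite /FB memF /QB dumontE Ds Cs Psg.
    by rewrite /FA memF /QA dumontE Db Cb Pbe.
Qed.


Lemma numD1E p n : numD1 p n = size (filter (fun w => dumont1 w && ~~ contains w p) (permutations (iota 1 n.*2))).
Proof. rewrite size_filter; exact: (card_count _ (fun w => dumont1 w && ~~ contains w p)). Qed.

Theorem lemma3p3 :
  numD1 [:: 4; 2; 1; 3] 0 = 1 /\
  forall n : nat,
    numD1 [:: 4; 2; 1; 3] n.+1 =
    \sum_(k < n.+1) numD1 [:: 4; 2; 1; 3] k * numD1 [:: 1; 3; 4; 2] (n - k).
Proof.
split.
  rewrite numD1E /=.
  have -> : contains [::] [:: 4; 2; 1; 3] = false.
    apply/negbTE/containsP => [[s Hs H]].
    by move: Hs H; rewrite subseq0 => /eqP ->.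
  by rewrite dumontE.
move=> n; rewrite numD1E.
under eq_bigr => k _ do rewrite !numD1E.
exact: (main_count n).
Qed.
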